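(* For all integers $k\geq 5$ and $n\geq 2$, $$Q(n,k)\leq 2^{c_k(k-2)^n},\qquad\text{where } c_k=\frac{\log_2 k!}{k-2}+\frac{k}{k-4}.$$
   Context: An $n$-ary quasigroup of order $k$ is a function $f:\Sigma^n\to\Sigma$, where $\Sigma=\{0,1,\dots,k-1\}$, such that fixing any $n-1$ of its arguments to arbitrary values of $\Sigma$ yields a bijection $\Sigma\to\Sigma$ in the remaining argument. $Q(n,k)$ denotes the number of distinct $n$-ary quasigroups of order $k$ on the fixed set $\Sigma=\{0,1,\dots,k-1\}$. *)

(* Defs.v *)
From mathcomp Require Import all_boot.
From Stdlib Require Import Reals.
Set Implicit Arguments. Unset Strict Implicit. Unset Printing Implicit Defensive.

(* Sigma = 'I_k = {0,...,k-1}; an argument vector in Sigma^n is a finite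
   function 'I_n -> 'I_k. *)
Definition arg (n k : nat) := {ffun 'I_n -> 'I_k}.

Definition upd (n k : nat) (x : arg n k) (i : 'I_n) (a : 'I_k) : arg n k :=
  [ffun j => if j == i then a else x j].

Definition bijectiveb (k : nat) (g : 'I_k -> 'I_k) : bool :=
  injectiveb g && [forall y : 'I_k, exists a : 'I_k, g a == y].

Definition is_quasigroup (n k : nat) (f : {ffun arg n k -> 'I_k}) : bool :=
  [forall i : 'I_n, forall x : arg n k, bijectiveb (fun a => f (upd x i a))].

Definition Q (n k : nat) : nat :=
  #|[set f : {ffun arg n k -> 'I_k} | is_quasigroup f]|.

Local Open Scope R_scope.

Definition log2 (x : R) : R := ln x / ln 2.

Definition c_const (k : nat) : R :=
  log2 (INR (k`!)) / (INR k - 2) + INR k / (INR k - 4).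

(* Main.v *)
Require Import Defs.
From mathcomp Require Import all_boot zify.
Set Implicit Arguments. Unset Strict Implicit. Unset Printing Implicit Defensive.

Lemma upd_id n k (y : arg n k) i : upd y i (y i) = y.
Proof. by apply/ffunP => j; rewrite ffunE; case: eqP => // ->. Qed.

Lemma upd_upd n k (y : arg n k) i a b : upd (upd y i a) i b = upd y i b.
Proof. by apply/ffunP => j; rewrite !ffunE; case: eqP. Qed.

Lemma upd_eq n k (y : arg n k) i a : upd y i a i = a.
Proof. by rewrite ffunE eqxx. Qed.

Lemma upd_neq n k (y : arg n k) i j a : j != i -> upd y i a j = y j.
Proof. by rewrite ffunE => /negbTE ->. Qed.

Lemma leq_expr m n e : m <= n -> m ^ e <= n ^ e.
Proof. by case: e => [|e] //= h; rewrite leq_exp2r. Qed.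

Lemma boolalg (X : finType) (P : pred {set X}) (s : nat) :
  (forall S T, P S -> P T -> P (S :\: T)) ->
  (forall S, P S -> S != set0 -> s <= #|S|) ->
  forall U : {set X}, #|[set S | P S & S \subset U]| ^ s <= 2 ^ #|U|.
Proof.
move=> hD hs U.
have [N] := ubnP #|U|; elim: N U => // N IH U hU.
case: (boolP [exists A, [&& P A, A \subset U & A != set0]]) => [/existsP [A0 HA0]|].
- case: (@arg_minnP _ A0 (fun A => [&& P A, A \subset U & A != set0]) (fun A => #|A|) HA0) => /= A /and3P [PA AU An0] Amin.
  have hI : forall S, P S -> S :&: A = set0 \/ S :&: A = A.
    move=> S PS.
    have PSA : P (S :&: A).
      have -> : S :&: A = S :\: (S :\: A).
        by apply/setP => x; rewrite !inE; case: (x \in S); case: (x \in A).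
      by apply: (hD) => //; apply: (hD).
    case: (eqVneq (S :&: A) set0) => [->|ne]; first by left.
    right; apply/eqP; rewrite eqEcard subsetIr /=.
    apply: Amin; rewrite PSA ne andbT; apply: subset_trans (subsetIr _ _) AU.
  set FU := [set S | P S & S \subset U].
  set FV := [set S | P S & S \subset U :\: A].
  have hcard : #|FU| <= #|FV| * 2.
    have -> : 2 = #|[set: bool]| by rewrite cardsT card_bool.
    rewrite -cardsX -(@card_in_imset _ _ (fun S => (S :\: A, A \subset S)) FU).
      apply: subset_leq_card; apply/subsetP => z /imsetP [S]; rewrite !inE => /andP [PS SU] ->.
      rewrite /= andbT hD //=; apply/subsetP => x; rewrite !inE => /andP [-> xS].
      by rewrite (subsetP SU).
    move=> S T; rewrite !inE => /andP [PS _] /andP [PT _] [eD eA].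
    rewrite -(setID S A) -(setID T A) eD.
    have key : forall S, P S -> S :&: A = (if A \subset S then A else set0).
      move=> S0 PS0; case: (hI S0 PS0) => h.
        case: ifP => // /setIidPr; rewrite h => hA; by move: An0; rewrite hA eqxx.
      by rewrite h; move/setIidPr: h => ->.
    by rewrite !key // eA.
    have hVU : #|U :\: A| < N.
      rewrite cardsD (setIidPr AU) -ltnS; apply: leq_trans hU; rewrite ltnS.
      have h1 := subset_leq_card AU; have h2 : 0 < #|A| by rewrite card_gt0.
      lia.
    have := IH _ hVU; rewrite -/FV => IHV.
    have sA := hs _ PA An0.
    apply: (@leq_trans ((#|FV| * 2) ^ s)); first by apply: leq_expr.
    rewrite expnMn; apply: (@leq_trans (2 ^ #|U :\: A| * 2 ^ #|A|)).
      by apply: leq_mul => //; apply: leq_pexp2l.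
    rewrite -expnD leq_exp2l // cardsD (setIidPr AU).
    have h1 := subset_leq_card AU; lia.
  move=> hno.
  apply: (@leq_trans (1 ^ s)); last by rewrite exp1n expn_gt0.
  apply: leq_expr; rewrite -(cards1 (@set0 X)); apply: subset_leq_card.
  apply/subsetP => S; rewrite !inE => /andP [PS SU]; apply/negPn/negP => Sn0.
  by move/existsP: hno; apply; exists S; rewrite PS SU.
Qed.


Lemma cube m k (J : {set 'I_m}) (S : {set arg m k}) :
  S != set0 ->
  (forall y i, y \in S -> i \in J -> exists2 a, a != y i & upd y i a \in S) ->
  2 ^ #|J| <= #|S|.
Proof.
have [N] := ubnP #|J|; elim: N J S => // N IH J S hJ Sn0 hS.
case: (set_0Vmem J) => [->|[i iJ]]; first by rewrite cards0 expn0 card_gt0.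
case/set0Pn: Sn0 => y0 y0S.
set C := [set y : arg m k | y i == y0 i].
have hJ' : #|J :\ i| < N by move: hJ; rewrite (cardsD1 i J) iJ.
have prop : forall T : {set arg m k}, (forall y j a, j != i -> (y \in T) = (upd y j a \in T)) ->
   forall y j, y \in S :&: T -> j \in J :\ i -> exists2 a, a != y j & upd y j a \in S :&: T.
  move=> T hT y j; rewrite !inE => /andP [yS yT] /andP [ji jJ].
  case: (hS y j yS jJ) => a ay ya; exists a => //; rewrite inE ya -hT //.
have hC : forall y j a, j != i -> (y \in C) = (upd y j a \in C).
  by move=> y j a ji; rewrite !inE upd_neq // eq_sym.
have hCc : forall y j a, j != i -> (y \in ~: C) = (upd y j a \in ~: C).
  by move=> y j a ji; rewrite !inE upd_neq // eq_sym.
have e1 : 2 ^ #|J :\ i| <= #|S :&: C|.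
  apply: IH => //; last exact: prop.
  by apply/set0Pn; exists y0; rewrite !inE y0S eqxx.
have e2 : 2 ^ #|J :\ i| <= #|S :&: ~: C|.
  apply: IH => //; last exact: prop.
  case: (hS y0 i y0S iJ) => a ay ya.
  by apply/set0Pn; exists (upd y0 i a); rewrite !inE ya upd_eq.
rewrite -(cardsID C S) -setDE in e2 *.
by rewrite (cardsD1 i J) iJ expnS mul2n -addnn leq_add.
Qed.

Definition ext m k (y : arg m k) (b : 'I_k) : arg m.+1 k :=
  [ffun j => if unlift ord_max j is Some j' then y j' else b].
Definition layer m k (f : {ffun arg m.+1 k -> 'I_k}) (b : 'I_k) : {ffun arg m k -> 'I_k} :=
  [ffun y => f (ext y b)].

Lemma ext_upd m k (y : arg m k) i a b :
  ext (upd y i a) b = upd (ext y b) (lift ord_max i) a.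
Proof.
apply/ffunP => j; rewrite !ffunE; case: unliftP => [j' ->|->].
  by rewrite (inj_eq lift_inj) ffunE.
by rewrite (negbTE (neq_lift _ _)).
Qed.

Lemma ext_max m k (y : arg m k) b c : upd (ext y b) ord_max c = ext y c.
Proof.
apply/ffunP => j; rewrite !ffunE; case: unliftP => [j' ->|->].
  by rewrite eq_sym (negbTE (neq_lift _ _)).
by rewrite eqxx.
Qed.

Lemma ext_surj m k (x : arg m.+1 k) : x = ext [ffun j => x (lift ord_max j)] (x ord_max).
Proof.
apply/ffunP => j; rewrite !ffunE; case: unliftP => [j' ->|->] //.
by rewrite ffunE.
Qed.

Lemma qgP n k (f : {ffun arg n k -> 'I_k}) : is_quasigroup f ->
  forall i x, injective (fun a => f (upd x i a)) /\ forall v, exists a, f (upd x i a) = v.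
Proof.
move=> /forallP h i x; move: (h i) => /forallP /(_ x) /andP [/injectiveP hi /forallP hs].
by split => // v; case/existsP: (hs v) => a /eqP; exists a.
Qed.

Lemma layer_qg m k (f : {ffun arg m.+1 k -> 'I_k}) b : is_quasigroup f -> is_quasigroup (layer f b).
Proof.
move=> /forallP h; apply/forallP => i; apply/forallP => x.
move: (h (lift ord_max i)) => /forallP /(_ (ext x b)) /andP [hi hs].
apply/andP; split.
  apply/injectiveP => a1 a2; rewrite /= !ffunE !ext_upd; exact: (injectiveP _ hi).
apply/forallP => v; case/existsP: (forallP hs v) => a ha; apply/existsP; exists a.
by rewrite ffunE ext_upd.
Qed.

Lemma layer_inj m k (f g : {ffun arg m.+1 k -> 'I_k}) :
  (forall b, layer f b = layer g b) -> f = g.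
Proof.
move=> h; apply/ffunP => x; rewrite (ext_surj x).
by move: (h (x ord_max)) => /ffunP /(_ [ffun j => x (lift ord_max j)]); rewrite !ffunE.
Qed.

Lemma switch_lemma m k (g g0 h0 : {ffun arg m k -> 'I_k}) :
  is_quasigroup g -> is_quasigroup g0 -> is_quasigroup h0 ->
  (forall w, g0 w != h0 w) -> (forall w, g w = g0 w \/ g w = h0 w) ->
  forall y i a, h0 y = g0 (upd y i a) ->
  (g y == h0 y) = (g (upd y i a) == h0 (upd y i a)).
Proof.
move=> qg qg0 qh0 dis dich y i a e.
case: (qgP qg i y) => [ginj gsurj].
case: (qgP qg0 i y) => [g0inj _].
case: (qgP qh0 i y) => [h0inj _].
have yid := upd_id y i.
apply/eqP/eqP => [gy|gz].
  case: (dich (upd y i a)) => // gz.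
  have : a = y i by apply: ginj; rewrite /= gz -e yid gy.
  by move=> ea; move: (dis y) e; rewrite ea yid => /negP + e'; rewrite e' eqxx.
case: (dich y) => // gy.
case: (gsurj (h0 y)) => c gc.
case: (dich (upd y i c)) => gw.
  have ca : c = a by apply: g0inj; rewrite /= -gw gc e.
  by move: gw (dis (upd y i a)); rewrite ca gz => ->; rewrite eqxx.
have cy : c = y i by apply: h0inj; rewrite /= -gw gc yid.
by move: gc (dis y); rewrite cy yid -gy => ->; rewrite eqxx.
Qed.

Definition s1 K : 'I_K.+2 := inord K.

Lemma s1_val K : (s1 K : nat) = K.
Proof. by rewrite /s1 inordK. Qed.

Lemma cases3 K (b : 'I_K.+2) : b < K \/ b = s1 K \/ b = ord_max.
Proof.
case: (ltnP b K) => hb; [by left|right].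
have := ltn_ord b; rewrite ltnS leq_eqVlt => /orP [/eqP h|h].
  by right; apply: val_inj.
by left; apply: val_inj => /=; rewrite s1_val; lia.
Qed.

Lemma s1_neq K : s1 K != ord_max.
Proof. apply/eqP => h; have := congr1 (@nat_of_ord _) h; rewrite s1_val /=; lia. Qed.

Definition tf m K (f : {ffun arg m.+1 K.+2 -> 'I_K.+2}) :
  {ffun 'I_K -> {ffun arg m K.+2 -> 'I_K.+2}} :=
  [ffun a => layer f (widen_ord (leqW (leqnSn K)) a)].

Lemma tf_agree m K (f f0 : {ffun arg m.+1 K.+2 -> 'I_K.+2}) : tf f = tf f0 ->
  forall y (b : 'I_K.+2), b < K -> layer f b y = layer f0 b y.
Proof.
move=> e y b hb; move/ffunP: e => /(_ (Ordinal hb)); rewrite /tf !ffunE => /ffunP /(_ y).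
have -> : widen_ord (leqW (leqnSn K)) (Ordinal hb) = b by apply: val_inj.
by rewrite !ffunE.
Qed.

Lemma line_qg m k (f : {ffun arg m.+1 k -> 'I_k}) y : is_quasigroup f ->
  injective (fun b => layer f b y) /\ forall v, exists b, layer f b y = v.
Proof.
move=> qf; case: k f y qf => [|k] f y qf.
  by split; case.
case: (qgP qf ord_max (ext y ord0)) => hi hs; split.
  by move=> b c; rewrite /= !ffunE -(ext_max y ord0 b) -(ext_max y ord0 c); apply: hi.
by move=> v; case: (hs v) => b hb; exists b; rewrite ffunE -(ext_max y ord0 b).
Qed.

Lemma in2 m K (f f0 : {ffun arg m.+1 K.+2 -> 'I_K.+2}) y (b : 'I_K.+2) :
  is_quasigroup f -> is_quasigroup f0 -> tf f = tf f0 -> K <= b ->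
  layer f b y = layer f0 (s1 K) y \/ layer f b y = layer f0 ord_max y.
Proof.
move=> qf qf0 e hb.
case: (line_qg y qf) => finj _; case: (line_qg y qf0) => _ f0s.
case: (f0s (layer f b y)) => c hc.
case: (cases3 c) => [hc'|[ec|ec]]; [|by left; rewrite -hc ec|by right; rewrite -hc ec].
have : c = b by apply: finj; rewrite /= (tf_agree e).
by move=> ecb; move: hc'; rewrite ecb ltnNge hb.
Qed.

Lemma dist m K (f : {ffun arg m.+1 K.+2 -> 'I_K.+2}) y :
  is_quasigroup f -> layer f (s1 K) y != layer f ord_max y.
Proof.
move=> qf; case: (line_qg y qf) => finj _.
by apply/eqP => /finj /eqP; rewrite (negbTE (s1_neq K)).
Qed.

Lemma two_vals (T : eqType) (u v x x' : T) : u != v -> (x = u \/ x = v) -> (x' = u \/ x' = v) ->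
  (x == v) = (x' == v) -> x = x'.
Proof.
move=> uv [->|->] [->|->] //; rewrite ?eqxx ?(negbTE uv) //.
Qed.

Lemma two_vals2 (T : eqType) (u v x x' z : T) : u != v -> (x = u \/ x = v) -> (x' = u \/ x' = v) ->
  (z = u \/ z = v) -> x != z -> x' != z -> x = x'.
Proof.
move=> uv [->|->] [->|->] [->|->] //; rewrite ?eqxx //.
Qed.

Lemma core m K (t : {ffun 'I_K -> {ffun arg m K.+2 -> 'I_K.+2}}) :
  #|[set f : {ffun arg m.+1 K.+2 -> 'I_K.+2} | is_quasigroup f && (tf f == t)]| ^ (2 ^ m)
    <= 2 ^ (K.+2 ^ m).
Proof.
set A := [set f | _].
case: (set_0Vmem A) => [->|[f0 f0A]]; first by rewrite cards0 exp0n // expn_gt0.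
move: f0A; rewrite inE => /andP [qf0 /eqP tf0].
set g0 := layer f0 (s1 K); set h0 := layer f0 ord_max.
have qg0 : is_quasigroup g0 by apply: layer_qg.
have qh0 : is_quasigroup h0 by apply: layer_qg.
have dis : forall w, g0 w != h0 w by move=> w; rewrite /g0 /h0; apply: dist.
have Ks1 : K <= s1 K by rewrite s1_val.
pose P := fun S : {set arg m K.+2} => [forall y, forall i, forall a,
   (h0 y == g0 (upd y i a)) ==> ((y \in S) == (upd y i a \in S))].
have hdiff : forall S T, P S -> P T -> P (S :\: T).
  move=> S T /forallP hS /forallP hT; apply/forallP => y; apply/forallP => i; apply/forallP => a.
  apply/implyP => e.
  move: (hS y) => /forallP /(_ i) /forallP /(_ a) /implyP /(_ e) /eqP.
  move: (hT y) => /forallP /(_ i) /forallP /(_ a) /implyP /(_ e) /eqP.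
  by rewrite !inE => -> ->.
have hsize : forall S, P S -> S != set0 -> 2 ^ m <= #|S|.
  move=> S /forallP hS Sn0.
  have := @cube m K.+2 setT S Sn0; rewrite cardsT card_ord; apply.
  move=> y i yS _.
  case: (qgP qg0 i y) => _ gs; case: (gs (h0 y)) => a ha.
  exists a.
    apply/eqP => ea; move: (dis y) ha; rewrite ea upd_id => /negP + e; by rewrite e eqxx.
  move: (hS y) => /forallP /(_ i) /forallP /(_ a) /implyP.
  by rewrite ha eqxx => /(_ isT) /eqP <-.
have hb := @boolalg _ P (2 ^ m) hdiff hsize setT.
rewrite cardsT card_ffun card_ord in hb.
rewrite card_ord in hb; apply: leq_trans hb; apply: leq_expr.
have <- : #|[set [set y | layer f (s1 K) y == h0 y] | f in A]| = #|A|.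
  apply: card_in_imset => f f'; rewrite !inE => /andP [qf /eqP tff] /andP [qf' /eqP tff'] eS.
  have e1 : tf f = tf f0 by rewrite tff tf0.
  have e2 : tf f' = tf f0 by rewrite tff' tf0.
  have e3 : tf f = tf f' by rewrite tff tff'.
  have hs1 : forall y, layer f (s1 K) y = layer f' (s1 K) y.
    move=> y; move/setP: eS => /(_ y); rewrite !inE.
    apply: two_vals (dis y) _ _; exact: in2.
  apply: layer_inj => b; apply/ffunP => y.
  case: (cases3 b) => [hb0|[->|->]]; first exact: tf_agree.
    exact: hs1.
  apply: (two_vals2 (dis y) _ _ (in2 y qf qf0 e1 Ks1)).
  - by apply: in2 => //; rewrite leq_ord.
  - by apply: in2 => //; rewrite leq_ord.
  - by rewrite eq_sym; apply: dist.
  - by rewrite hs1 eq_sym; apply: dist.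
apply: subset_leq_card; apply/subsetP => S /imsetP [f]; rewrite inE => /andP [qf /eqP tff] ->.
rewrite inE subsetT andbT; apply/forallP => y; apply/forallP => i; apply/forallP => a.
apply/implyP => /eqP e.
have e1 : tf f = tf f0 by rewrite tff tf0.
rewrite !inE; apply/eqP; apply: (switch_lemma (layer_qg _ qf) qg0 qh0 dis) => //.
by move=> w; apply: in2.
Qed.

Lemma step m K : exists W, Q m.+1 K.+2 <= Q m K.+2 ^ K * W /\ W ^ (2 ^ m) <= 2 ^ (K.+2 ^ m).
Proof.
pose W := \max_(t : {ffun 'I_K -> {ffun arg m K.+2 -> 'I_K.+2}})
   #|[set f | is_quasigroup f && (tf f == t)]|.
exists W; split.
  rewrite /Q -sum1_card.
  rewrite (partition_big (fun f => tf f) (mem (ffun_on (mem [set g : {ffun arg m K.+2 -> 'I_K.+2} | is_quasigroup g])))).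
    apply: leq_trans (_ : \sum_(t in ffun_on (mem [set g : {ffun arg m K.+2 -> 'I_K.+2} | is_quasigroup g])) W <= _).
      apply: leq_sum => t _; rewrite sum1dep_card.
      have := @leq_bigmax _ (fun t : {ffun 'I_K -> {ffun arg m K.+2 -> 'I_K.+2}} => #|[set f | is_quasigroup f && (tf f == t)]|) t.
      rewrite -/W => hW; apply: leq_trans hW; apply/eq_leq/eq_card => f.
      by rewrite !inE.
    by rewrite sum_nat_const card_ffun_on card_ord.
  move=> f; rewrite inE => qf; apply/ffun_onP => a; rewrite ffunE inE.
  exact: layer_qg.
apply: (big_ind (fun x => x ^ (2 ^ m) <= 2 ^ (K.+2 ^ m))).
- by rewrite exp0n // expn_gt0.
- by move=> x y hx hy; rewrite /maxn; case: ltnP.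
- by move=> t _; apply: core.
Qed.

Lemma arg1_const k (x : arg 1 k) : x = [ffun _ => x ord0].
Proof. by apply/ffunP => j; rewrite ffunE (ord1 j). Qed.

Lemma base k : Q 1 k <= k`!.
Proof.
rewrite -ffactnn -{2 3}(card_ord k) -card_inj_ffuns /Q.
rewrite -(@card_in_imset _ _ (fun f : {ffun arg 1 k -> 'I_k} => [ffun a : 'I_k => f [ffun _ => a]])
            [set f | is_quasigroup f]).
  apply: subset_leq_card; apply/subsetP => g /imsetP [f]; rewrite inE => qf ->; rewrite inE.
  apply/injectiveP => a b; rewrite !ffunE.
  clear g; case: k f qf a b => [|k] f qf a b; first by case: a.
  case: (qgP qf ord0 [ffun _ => ord0]) => hi _.
  have h : forall c : 'I_k.+1, upd ([ffun _ => ord0] : arg 1 k.+1) ord0 c = ([ffun _ => c] : arg 1 k.+1).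
    by move=> c; apply/ffunP => j; rewrite ffunE ffunE ffunE (ord1 j) eqxx.
  by move=> e; apply: hi => /=; rewrite !h.
move=> f f' _ _ e; apply/ffunP => x; rewrite (arg1_const x).
by move/ffunP: e => /(_ (x ord0)); rewrite !ffunE.
Qed.

From mathcomp Require Import all_boot.
From Stdlib Require Import Reals Lra.
Unset Implicit Arguments.

Lemma ln_le' (x y : R) : (0 < x)%R -> (x <= y)%R -> (ln x <= ln y)%R.
Proof.
move=> hx hxy; case: (Rle_lt_or_eq_dec _ _ hxy) => h.
  by left; apply: ln_increasing.
by rewrite h; right.
Qed.

Lemma exp_le' (x y : R) : (x <= y)%R -> (exp x <= exp y)%R.
Proof.
move=> hxy; case: (Rle_lt_or_eq_dec _ _ hxy) => h.
  by left; apply: exp_increasing.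
by rewrite h; right.
Qed.

Lemma INR_le (m n : nat) : m <= n -> (INR m <= INR n)%R.
Proof. by move/leP; apply: le_INR. Qed.

Lemma Rpower2_log2 (x : R) : (0 < x)%R -> Rpower 2 (log2 x) = x.
Proof.
move=> hx; rewrite /Rpower /log2.
have h2 : (ln 2 <> 0)%R.
  have := ln_increasing 1 2 Rlt_0_1 ltac:(lra); rewrite ln_1; lra.
by rewrite /Rdiv Rmult_assoc Rinv_l // Rmult_1_r exp_ln.
Qed.

Lemma expn_pow m n : expn m n = Nat.pow m n.
Proof. by elim: n => // n IH; rewrite expnS IH. Qed.

Lemma W_bound (W N E : nat) : 0 < N -> expn W N <= expn 2 E ->
  (INR W <= Rpower 2 (INR E / INR N))%R.
Proof.
move=> hN hW.
rewrite !expn_pow in hW.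
case: W hW => [|W] hW.
  by rewrite /Rpower; simpl; left; apply: exp_pos.
have hWp : (0 < INR W.+1)%R by apply: lt_0_INR; apply/ltP.
have hNp : (0 < INR N)%R by apply: lt_0_INR; apply/ltP.
rewrite -{1}(exp_ln _ hWp) /Rpower; apply: exp_le'.
have h := INR_le _ _ hW; rewrite !pow_INR in h.
have := ln_le' _ _ (pow_lt _ N hWp) h.
have i2 : INR 2 = 2%R by simpl; lra.
rewrite i2 in h |- *.
rewrite !ln_pow //; last lra.
move=> hl; apply: (Rmult_le_reg_l (INR N)) => //.
replace (INR N * (INR E / INR N * ln 2))%R with (INR E * ln 2)%R by (field; lra).
lra.
Qed.

Definition Fb (K j : nat) : R :=
  (INR K ^ j * log2 (INR (K.+2)`!) +
   ((INR K + 2) / (INR K - 2)) * (INR K ^ j - ((INR K + 2) / 2) ^ j))%R.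

Lemma INRK2 K : INR K.+2 = (INR K + 2)%R.
Proof. rewrite !S_INR; lra. Qed.

Lemma qbound K (hK : 3 <= K) j : (INR (Q j.+1 K.+2) <= Rpower 2 (Fb K j))%R.
Proof.
have hK' : (3 <= INR K)%R by have := INR_le _ _ hK; rewrite (_ : INR 3 = 3%R) //; simpl; lra.
elim: j => [|j IH].
  rewrite /Fb !pow_O (_ : forall x y, (1 * x + y * (1 - 1) = x)%R); last by move=> x y; ring.
  rewrite Rpower2_log2; first by apply: INR_le; apply: base.
  by apply: lt_0_INR; apply/ltP; apply: fact_gt0.
case: (step j.+1 K) => W [h1 h2].
have hW := @W_bound W (expn 2 j.+1) _ ltac:(by rewrite expn_gt0) h2.
have e : (INR (expn K.+2 j.+1) / INR (expn 2 j.+1) = ((INR K + 2) / 2) ^ j.+1)%R.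
  by rewrite !expn_pow !pow_INR INRK2 /Rdiv Rpow_mult_distr pow_inv (_ : INR 2 = 2%R) //; simpl; lra.
rewrite e in hW.
apply: Rle_trans (INR_le _ _ h1) _.
rewrite -multE mult_INR expn_pow pow_INR.
have hp : forall x, (0 < Rpower 2 x)%R by move=> x; apply: exp_pos.
apply: Rle_trans (_ : (Rpower 2 (Fb K j) ^ K * Rpower 2 (((INR K + 2) / 2) ^ j.+1) <= _)%R).
  apply: Rmult_le_compat.
  - by apply: pow_le; apply: pos_INR.
  - by apply: pos_INR.
  - by apply: pow_incr; split => //; apply: pos_INR.
  - exact: hW.
rewrite -Rpower_pow // Rpower_mult -Rpower_plus.
apply: Req_le; congr Rpower.
rewrite /Fb -!tech_pow_Rmult; field; lra.
Qed.

Theorem theorem1 (k n : nat) (hk : (5 <= k)%nat) (hn : (2 <= n)%nat) :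
  (INR (Q n k) <= Rpower 2 (c_const k * (INR k - 2) ^ n))%R.
Proof.
case: k hk => [|[|K]] hk //; case: n hn => [|j] hn //.
have hK : 3 <= K by [].
have hK' : (3 <= INR K)%R by have := INR_le _ _ hK; rewrite (_ : INR 3 = 3%R) //; simpl; lra.
apply: Rle_trans (qbound K hK j) _.
apply: Rle_Rpower; first lra.
rewrite /c_const /Fb INRK2 -tech_pow_Rmult.
set L := log2 _.
set a := (INR K ^ j)%R; set b := (((INR K + 2) / 2) ^ j)%R.
have ha : (0 <= a)%R by apply: pow_le; lra.
have hb : (0 <= b)%R by apply: pow_le; lra.
replace (INR K + 2 - 2)%R with (INR K) by ring.
replace (INR K + 2 - 4)%R with (INR K - 2)%R by ring.
set c := ((INR K + 2) / (INR K - 2))%R.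
have hc : (0 < c)%R by apply: Rdiv_lt_0_compat; lra.
replace ((L / INR K + c) * (INR K * INR K ^ j))%R with (a * L + c * (INR K * a))%R by (rewrite /a; field; lra).
apply: Rplus_le_compat_l; apply: Rmult_le_compat_l; nra.
Qed.
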